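(* Let $$f(z)=\frac{1-z-z^2-\sqrt{5z^4+10z^3-z^2-6z+1}}{2-2z-2z^2},$$ where the square root is the formal power series with constant term $1$. Then for every positive integer $n$, the Riordan matrix $\left(\left(\frac{1}{1-z-z^2}\right)^n, f(z)\right)$ is a pseudo-involution.
   Context: A Riordan matrix is a pair $(g(z),f(z))$ of formal power series over $\mathbb{C}$ with $g(z)=\sum_{n\ge 0} g_n z^n$, $g_0\neq 0$, and $f(z)=\sum_{n\ge 1} f_n z^n$ with $f_1\neq 0$; it represents the infinite lower-triangular matrix whose $k$-th column ($k\ge 0$) has generating function $g(z)f(z)^k$. Riordan matrices form a group under matrix multiplication, where $(g(z),f(z))*(h(z),l(z))=(g(z)h(f(z)),\,l(f(z)))$ and the identity is $(1,z)$. Let $M=(1,-z)$. A Riordan matrix $L$ is called a pseudo-involution if $(L*M)*(L*M)=(1,z)$. *)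

(* Defs.v *)
From HB Require Import structures.
From mathcomp Require Import all_boot all_order all_algebra.
Set Implicit Arguments.
Unset Strict Implicit.
Unset Printing Implicit Defensive.
Import GRing.Theory Num.Theory.
Local Open Scope ring_scope.

Definition fps (C : Type) := nat -> C.

Section FPS.
Variable C : fieldType.

Definition fps_poly (s : seq C) : fps C := fun n => nth 0 s n.

Definition fps_one : fps C := fps_poly [:: 1].
Definition fps_z : fps C := fps_poly [:: 0; 1].

Definition fps_add (a b : fps C) : fps C := fun n => a n + b n.
Definition fps_opp (a : fps C) : fps C := fun n => - a n.

Definition fps_mul (a b : fps C) : fps C :=
  fun n => \sum_(i < n.+1) a i * b (n - i)%N.

Fixpoint fps_exp (a : fps C) (k : nat) : fps C :=
  if k is k'.+1 then fps_mul a (fps_exp a k') else fps_one.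

(* composition g(f(z)), meaningful when f 0 = 0 (then only k <= n contribute) *)
Definition fps_comp (g f : fps C) : fps C :=
  fun n => \sum_(k < n.+1) g k * fps_exp f k n.

(* multiplicative inverse of a series with a 0 != 0:
   b_0 = a_0^-1,  b_n = - a_0^-1 * sum_{j=1}^n a_j b_{n-j};
   fps_inv_seq a n = [:: b_0; ...; b_n] *)
Fixpoint fps_inv_seq (a : fps C) (n : nat) : seq C :=
  if n is n'.+1 then
    let s := fps_inv_seq a n' in
    rcons s (- (a 0%N)^-1 * \sum_(i < n) a i.+1 * nth 0 s (n' - i)%N)
  else [:: (a 0%N)^-1].

Definition fps_inv (a : fps C) : fps C := fun n => nth 0 (fps_inv_seq a n) n.

(* square root with constant term 1 of a series p with p 0 = 1:
   s_0 = 1,  2 s_n = p_n - sum_{i=1}^{n-1} s_i s_{n-i};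
   fps_sqrt1_seq p n = [:: s_0; ...; s_n] *)
Fixpoint fps_sqrt1_seq (p : fps C) (n : nat) : seq C :=
  if n is n'.+1 then
    let s := fps_sqrt1_seq p n' in
    rcons s ((p n - \sum_(1 <= i < n) nth 0 s i * nth 0 s (n - i)%N) / 2)
  else [:: 1].

Definition fps_sqrt1 (p : fps C) : fps C := fun n => nth 0 (fps_sqrt1_seq p n) n.

Definition is_riordan (g f : fps C) : Prop :=
  g 0%N != 0 /\ f 0%N = 0 /\ f 1%N != 0.

Definition riordan_mul (L M : fps C * fps C) : fps C * fps C :=
  (fps_mul L.1 (fps_comp M.1 L.2), fps_comp M.2 L.2).

Definition riordan_M : fps C * fps C := (fps_one, fps_opp fps_z).

Definition riordan_eq (L M : fps C * fps C) : Prop :=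
  (forall n, L.1 n = M.1 n) /\ (forall n, L.2 n = M.2 n).

Definition pseudo_involution (g f : fps C) : Prop :=
  is_riordan g f /\
  let LM := riordan_mul (g, f) riordan_M in
  riordan_eq (riordan_mul LM LM) (fps_one, fps_z).

End FPS.

(* Main.v *)
From HB Require Import structures.
Require Import Defs.
From mathcomp Require Import all_boot all_order all_algebra.
From mathcomp Require boolp.
From mathcomp Require Import zify ring.
Set Implicit Arguments.
Unset Strict Implicit.
Unset Printing Implicit Defensive.
Import GRing.Theory Num.Theory.
Local Open Scope ring_scope.


Section Ring.
Variable C : fieldType.

Definition ap (N : nat) (a : fps C) (p : {poly C}) :=
  forall i, (i < N)%N -> a i = p`_i.

Definition tr (a : fps C) N : {poly C} := \poly_(i < N) a i.

Lemma ap_tr a N : ap N a (tr a N).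
Proof. by move=> i hi; rewrite coef_poly hi. Qed.

Lemma ap_add a b p q N : ap N a p -> ap N b q -> ap N (fps_add a b) (p + q).
Proof. by move=> ha hb i hi; rewrite coefD /fps_add ha ?hb. Qed.

Lemma ap_opp a p N : ap N a p -> ap N (fps_opp a) (- p).
Proof. by move=> ha i hi; rewrite coefN /fps_opp ha. Qed.

Lemma ap_mul a b p q N : ap N a p -> ap N b q -> ap N (fps_mul a b) (p * q).
Proof.
move=> ha hb i hi; rewrite coefM /fps_mul; apply: eq_bigr => j _.
move: (ltn_ord j) => hj; rewrite ha ?hb //; lia.
Qed.

Lemma ap_poly s N : ap N (fps_poly s) (Poly s).
Proof. by move=> i _; rewrite coef_Poly. Qed.

Lemma ap_exp a p N k : ap N a p -> ap N (fps_exp a k) (p ^+ k).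
Proof.
move=> ha; elim: k => [|k IH] /=; first by move=> i _; rewrite expr0 coef1 /fps_one /fps_poly; case: i => [|[|i]] //=; rewrite nth_nil.
by rewrite exprS; apply: ap_mul.
Qed.

Lemma ap_eq a b N : (forall p, ap N a p -> ap N b p) -> forall i, (i < N)%N -> a i = b i.
Proof. by move=> h i hi; rewrite (ap_tr a hi) (h _ (@ap_tr a N) i hi). Qed.

Lemma fpsP (a b : fps C) : (forall i p, ap i.+1 a p -> b i = p`_i) -> a = b.
Proof.
move=> h; apply: boolp.funext => i.
by rewrite (ap_tr a (ltnSn i)) (h i _ (@ap_tr a i.+1)).
Qed.

Lemma fps_ext (a b : fps C) : (forall N, exists2 p, ap N a p & ap N b p) -> a = b.
Proof.
move=> h; apply: boolp.funext => i; case: (h i.+1) => p h1 h2.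
by rewrite h1 ?h2.
Qed.

Definition fps_zero : fps C := fun _ => 0.
Lemma ap_zero N : ap N fps_zero 0.
Proof. by move=> i _; rewrite coef0. Qed.

Lemma ap_one N : ap N (fps_one C) 1.
Proof. by move=> i _; rewrite coef1 /fps_one /fps_poly; case: i => [|[|i]] //=; rewrite nth_nil. Qed.

Lemma fps_addA : associative (@fps_add C).
Proof. by move=> a b c; apply: boolp.funext => i; rewrite /fps_add addrA. Qed.
Lemma fps_addC : commutative (@fps_add C).
Proof. by move=> a b; apply: boolp.funext => i; rewrite /fps_add addrC. Qed.
Lemma fps_add0 : left_id fps_zero (@fps_add C).
Proof. by move=> a; apply: boolp.funext => i; rewrite /fps_add /fps_zero add0r. Qed.
Lemma fps_addN : left_inverse fps_zero (@fps_opp C) (@fps_add C).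
Proof. by move=> a; apply: boolp.funext => i; rewrite /fps_add /fps_opp /fps_zero addNr. Qed.

Lemma fps_mulA : associative (@fps_mul C).
Proof.
move=> a b c; apply: fps_ext => N; exists (tr a N * (tr b N * tr c N)).
  by apply: ap_mul; [exact: ap_tr | apply: ap_mul; exact: ap_tr].
by rewrite mulrA; apply: ap_mul; [apply: ap_mul; exact: ap_tr | exact: ap_tr].
Qed.
Lemma fps_mulC : commutative (@fps_mul C).
Proof.
move=> a b; apply: fps_ext => N; exists (tr a N * tr b N).
  by apply: ap_mul; exact: ap_tr.
by rewrite mulrC; apply: ap_mul; exact: ap_tr.
Qed.
Lemma fps_mul1 : left_id (fps_one C) (@fps_mul C).
Proof.
move=> a; apply: fps_ext => N; exists (1 * tr a N); first by apply: ap_mul; [exact: ap_one|exact: ap_tr].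
rewrite mul1r; exact: ap_tr.
Qed.
Lemma fps_mulDl : left_distributive (@fps_mul C) (@fps_add C).
Proof.
move=> a b c; apply: fps_ext => N; exists ((tr a N + tr b N) * tr c N).
  by apply: ap_mul; [apply: ap_add|]; exact: ap_tr.
by rewrite mulrDl; apply: ap_add; apply: ap_mul; exact: ap_tr.
Qed.
HB.instance Definition _ := boolp.gen_eqMixin (fps C).
HB.instance Definition _ := boolp.gen_choiceMixin (fps C).
Lemma fps_one_neq0 : fps_one C != fps_zero.
Proof.
apply/eqP => h; have := congr1 (fun a => a 0%N) h; rewrite /fps_one /fps_zero /fps_poly /=.
by move/eqP; rewrite oner_eq0.
Qed.

HB.instance Definition _ := GRing.isZmodule.Build (fps C) fps_addA fps_addC fps_add0 fps_addN.
HB.instance Definition _ := GRing.Zmodule_isComNzRing.Build (fps C) fps_mulA fps_mulC fps_mul1 fps_mulDl fps_one_neq0.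

Lemma mulE (a b : fps C) : fps_mul a b = a * b. Proof. by []. Qed.
Lemma addE (a b : fps C) : fps_add a b = a + b. Proof. by []. Qed.
Lemma oppE (a : fps C) : fps_opp a = - a. Proof. by []. Qed.
Lemma oneE : fps_one C = 1. Proof. by []. Qed.
Lemma expE (a : fps C) k : fps_exp a k = a ^+ k.
Proof. by elim: k => [|k IH] /=; rewrite ?expr0 ?exprS ?IH. Qed.

End Ring.


Section Comp.
Variable C : fieldType.

Lemma sum_extend (F : nat -> C) n m : (n <= m)%N ->
  (forall k, (n <= k < m)%N -> F k = 0) -> \sum_(k < n) F k = \sum_(k < m) F k.
Proof.
move=> nm h; rewrite -!(big_mkord xpredT) (big_cat_nat (leq0n n) nm) /=.
by rewrite [X in _ + X]big1_seq ?addr0 // => k; rewrite mem_index_iota => /andP[_ /h].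
Qed.

Lemma coef_exp_small (r : {poly C}) k i : r`_0 = 0 -> (i < k)%N -> (r ^+ k)`_i = 0.
Proof.
move=> r0 ik.
have -> : r = drop_poly 1 r * 'X^1.
  rewrite -{1}(poly_take_drop 1 r) [take_poly 1 r](_ : _ = 0) ?add0r //.
  apply/polyP => j; rewrite coef_take_poly coef0; case: j => //.
by rewrite exprMn expr1 coefMXn ik.
Qed.

Lemma ap_comp (g f : fps C) p r N : ap N g p -> ap N f r -> r`_0 = 0 ->
  ap N (fps_comp g f) (p \Po r).
Proof.
move=> hg hf r0 i hi; rewrite /fps_comp comp_polyE coef_sum.
transitivity (\sum_(k < i.+1) p`_k * (r ^+ k)`_i).
  apply: eq_bigr => k _; move: (ltn_ord k) => hk.
  by rewrite hg; [rewrite (ap_exp k hf) | lia].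
transitivity (\sum_(k < i.+1 + size p) p`_k * (r ^+ k)`_i).
  apply: (@sum_extend (fun k => p`_k * (r ^+ k)`_i) i.+1 (i.+1 + size p)); first lia.
  by move=> k /andP[hk _]; rewrite coef_exp_small ?mulr0.
rewrite [RHS](eq_bigr (fun k : 'I_(size p) => p`_k * (r^+k)`_i)); last by move=> k _; rewrite coefZ.
symmetry; apply: (@sum_extend (fun k => p`_k * (r ^+ k)`_i) (size p) (i.+1 + size p)); first lia.
by move=> k /andP[hk _]; rewrite nth_default ?mul0r.
Qed.

Variable f : fps C.
Hypothesis f0 : f 0%N = 0.

Lemma tr0 N : (tr f N)`_0 = 0.
Proof. by rewrite coef_poly; case: N. Qed.

Lemma compM (g h : fps C) : fps_comp (g * h) f = fps_comp g f * fps_comp h f.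
Proof.
apply: fps_ext => N; exists ((tr g N * tr h N) \Po tr f N).
  by apply: ap_comp; [apply: ap_mul; exact: ap_tr | exact: ap_tr | exact: tr0].
rewrite comp_polyM; apply: ap_mul; (apply: ap_comp; [exact: ap_tr | exact: ap_tr | exact: tr0]).
Qed.

Lemma compD (g h : fps C) : fps_comp (g + h) f = fps_comp g f + fps_comp h f.
Proof.
apply: fps_ext => N; exists ((tr g N + tr h N) \Po tr f N).
  by apply: ap_comp; [apply: ap_add; exact: ap_tr | exact: ap_tr | exact: tr0].
rewrite comp_polyD; apply: ap_add; (apply: ap_comp; [exact: ap_tr | exact: ap_tr | exact: tr0]).
Qed.

Lemma compN (g : fps C) : fps_comp (- g) f = - fps_comp g f.
Proof.
apply: fps_ext => N; exists (- (tr g N) \Po tr f N).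
  by apply: ap_comp; [apply: ap_opp; exact: ap_tr | exact: ap_tr | exact: tr0].
rewrite -[X in X \Po _]sub0r comp_polyB comp_poly0 sub0r; apply: ap_opp; (apply: ap_comp; [exact: ap_tr | exact: ap_tr | exact: tr0]).
Qed.

Lemma comp1 : fps_comp 1 f = 1.
Proof.
apply: fps_ext => N; exists (1 \Po tr f N).
  by apply: ap_comp; [exact: ap_one | exact: ap_tr | exact: tr0].
rewrite comp_polyC; exact: ap_one.
Qed.

Lemma ap_z N : ap N (fps_z C) 'X.
Proof.
have -> : ('X : {poly C}) = Poly [:: 0; 1] by rewrite -polyseqX polyseqK.
exact: ap_poly.
Qed.

Lemma compz : fps_comp (fps_z C) f = f.
Proof.
apply: fps_ext => N; exists ('X \Po tr f N).
  by apply: ap_comp; [exact: ap_z | exact: ap_tr | exact: tr0].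
rewrite comp_polyX; exact: ap_tr.
Qed.

Lemma compX (g : fps C) k : fps_comp (g ^+ k) f = fps_comp g f ^+ k.
Proof. by elim: k => [|k IH]; rewrite ?expr0 ?comp1 // !exprS compM IH. Qed.

End Comp.


Section Inv.
Variable C : fieldType.
Implicit Types a p : fps C.

Lemma one0 : (1 : fps C) 0%N = 1. Proof. by []. Qed.
Lemma oneS m : (1 : fps C) m.+1 = 0. Proof. by rewrite -oneE /fps_one /fps_poly /= nth_nil. Qed.

Lemma inv_seq_size a m : size (fps_inv_seq a m) = m.+1.
Proof. by elim: m => [|m IH] //=; rewrite size_rcons IH. Qed.

Lemma inv_seq_nth a m i : (i <= m)%N -> nth 0 (fps_inv_seq a m) i = fps_inv a i.
Proof.
elim: m i => [|m IH] i hi; first by move: hi; rewrite leqn0 => /eqP ->.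
case: (ltnP i m.+1) => h.
  by rewrite /= nth_rcons inv_seq_size h IH.
by have -> : i = m.+1 by lia.
Qed.

Lemma inv_rec a m : fps_inv a m.+1 =
  - (a 0%N)^-1 * \sum_(i < m.+1) a i.+1 * fps_inv a (m - i)%N.
Proof.
rewrite {1}/fps_inv /= nth_rcons inv_seq_size ltnn eqxx; congr (_ * _).
by apply: eq_bigr => i _; rewrite inv_seq_nth ?leq_subr.
Qed.

Lemma fps_invP a : a 0%N != 0 -> a * fps_inv a = 1.
Proof.
move=> a0; apply: boolp.funext => -[|m].
  by rewrite -mulE /fps_mul big_ord1 /fps_inv /= mulfV.
rewrite -mulE /fps_mul big_ord_recl subn0 oneS.
under eq_bigr do rewrite subSS.
by rewrite inv_rec mulrA mulrN mulfV // mulN1r addNr.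
Qed.

Lemma sqrt_seq_size p m : size (fps_sqrt1_seq p m) = m.+1.
Proof. by elim: m => [|m IH] //=; rewrite size_rcons IH. Qed.

Lemma sqrt_seq_nth p m i : (i <= m)%N -> nth 0 (fps_sqrt1_seq p m) i = fps_sqrt1 p i.
Proof.
elim: m i => [|m IH] i hi; first by move: hi; rewrite leqn0 => /eqP ->.
case: (ltnP i m.+1) => h.
  by rewrite /= nth_rcons sqrt_seq_size h IH.
by have -> : i = m.+1 by lia.
Qed.

Lemma sqrt_rec p m : fps_sqrt1 p m.+1 =
  (p m.+1 - \sum_(i < m) fps_sqrt1 p i.+1 * fps_sqrt1 p (m - i)%N) / 2.
Proof.
rewrite {1}/fps_sqrt1 /= nth_rcons sqrt_seq_size ltnn eqxx; congr ((_ - _) / _).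
rewrite (big_addn 0 m.+1 1) subn1 /= big_mkord.
by apply: eq_bigr => i _; rewrite addn1 subSS !sqrt_seq_nth // ?leq_subr //; lia.
Qed.

Lemma fps_sqrtP p : p 0%N = 1 -> (2 : C) != 0 -> fps_sqrt1 p * fps_sqrt1 p = p.
Proof.
move=> p0 h2; apply: boolp.funext => -[|m].
  by rewrite -mulE /fps_mul big_ord1 /fps_sqrt1 /= mulr1 p0.
rewrite -mulE /fps_mul big_ord_recl subn0.
under eq_bigr do rewrite subSS.
rewrite big_ord_recr /= subnn.
have s0 : fps_sqrt1 p 0 = 1 by [].
rewrite s0 mul1r mulr1 addrCA -mulr2n (sqrt_rec p m).
set S := \sum_(i < m) _.
rewrite mulr2n; field; exact: h2.
Qed.

End Inv.


Section Main.
Variable C : fieldType.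

Lemma ap_expR (a : fps C) p N k : ap N a p -> ap N (a ^+ k) (p ^+ k).
Proof. by rewrite -expE; exact: ap_exp. Qed.

Lemma ap_polyE (s : seq C) p N : Poly s = p -> ap N (fps_poly s) p.
Proof. by move=> <-; exact: ap_poly. Qed.

Ltac apt := repeat first [ apply: ap_add | apply: ap_mul | apply: ap_opp | apply: ap_expR
   | exact: ap_one | exact: ap_z | exact: ap_tr ].

Local Notation z := (fps_z C).

Lemma hQ : fps_poly [:: 1; -1; -1] = 1 - z - z ^+ 2 :> fps C.
Proof.
apply: fps_ext => N; eexists; last first.
  by apt.
apply: ap_polyE; rewrite /Poly /= !cons_poly_def; ring.
Qed.


Lemma hD : fps_poly [:: 2; -2; -2] = fps_poly [:: 1; -1; -1] + fps_poly [:: 1; -1; -1] :> fps C.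
Proof.
apply: fps_ext => N; eexists; last first.
  by apply: ap_add; exact: ap_poly.
apply: ap_polyE; rewrite /Poly /= !cons_poly_def; ring.
Qed.

Lemma hP : fps_poly [:: 1; -6; -1; 10; 5] =
   (1 - z - z ^+ 2) * (1 - z - z ^+ 2) - (z + z * z) * (1 - z - z ^+ 2) * ((1 + 1) * (1 + 1)) :> fps C.
Proof.
apply: fps_ext => N; eexists; last first.
  by apt.
apply: ap_polyE; rewrite /Poly /= !cons_poly_def; ring.
Qed.

Lemma coef0M (a b : fps C) : (a * b) 0%N = a 0%N * b 0%N.
Proof. by rewrite -mulE /fps_mul big_ord1. Qed.

Lemma coef0X (a : fps C) k : (a ^+ k) 0%N = a 0%N ^+ k.
Proof. by elim: k => [|k IH]; rewrite ?expr0 // !exprS coef0M IH. Qed.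

Lemma cancel_unit (u X : fps C) : u 0%N != 0 -> u * X = 0 -> X = 0.
Proof.
move=> u0 h; have -> : X = fps_inv u * (u * X).
  by rewrite mulrA [fps_inv u * u]mulrC fps_invP // mul1r.
by rewrite h mulr0.
Qed.

Lemma comp0 (w : fps C) : fps_comp 0 w = 0.
Proof. by apply: boolp.funext => i; rewrite /fps_comp big1 // => k _; rewrite mul0r. Qed.


Lemma mainC (h2 : (2 : C) != 0) n (q P f : fps C) :
  q = fps_poly [:: 1; -1; -1] -> P = fps_poly [:: 1; -6; -1; 10; 5] ->
  f = fps_mul (fps_add q (fps_opp (fps_sqrt1 P))) (fps_inv (fps_poly [:: 2; -2; -2])) ->
  pseudo_involution (fps_exp (fps_inv q) n) f.
Proof.
move=> hq hP0 hf0.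
have Qe : q = 1 - z - z ^+ 2 by rewrite hq hQ.
have q0 : q 0%N = 1 by rewrite hq.
have hPe : P = q * q - (z + z * z) * q * ((1 + 1) * (1 + 1)) by rewrite hP0 hP Qe.
have hd : fps_poly [:: 2; -2; -2] = q + q by rewrite hD hq.
have hf : f = (q - fps_sqrt1 P) * fps_inv (q + q) by rewrite hf0 -hd.
have h11 : (1 + 1 : C) != 0 by rewrite -mulr2n.
have did : (q + q) * fps_inv (q + q) = 1.
  apply: fps_invP; rewrite -addE /fps_add q0; exact: h11.
have sP : fps_sqrt1 P * fps_sqrt1 P = P by apply: fps_sqrtP => //; rewrite hP0.
have fd : f * (q + q) = q - fps_sqrt1 P.
  by rewrite hf -mulrA [fps_inv _ * _]mulrC did mulr1.
have sq : fps_sqrt1 P = q - f * (q + q) by rewrite fd; ring.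
have hA : q * (f * f - f) + z + z * z = 0.
  apply: (@cancel_unit ((1 + 1) * (1 + 1) * q)).
    by rewrite !coef0M q0 mulr1 -!addE /fps_add mulf_neq0.
  transitivity (fps_sqrt1 P * fps_sqrt1 P - P); last by rewrite sP subrr.
  by rewrite sq hPe; ring.
have hA' : q * (f * f - f) = - (z + z * z) by rewrite -[LHS]subr0 -hA; ring.
have f0 : f 0%N = 0 by rewrite hf coef0M -addE -oppE /fps_add /fps_opp q0 subrr mul0r.
have hw0 : (- f) 0%N = 0 by rewrite -oppE /fps_opp f0 oppr0.
have hcomp : fps_comp q (- f) * (fps_comp f (- f) * fps_comp f (- f) - fps_comp f (- f))
    + - f + - f * - f = 0.
  have := congr1 (fun a => fps_comp a (- f)) hA.
  by rewrite /= comp0 !(compD hw0, compM hw0, compN hw0) (compz hw0).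
set w := - f in hw0 hcomp.
set cq := fps_comp q w in hcomp.
set Y := fps_comp f w in hcomp.
have hcq : cq = 1 - w - w ^+ 2.
  by rewrite /cq Qe !(compD hw0, compN hw0) (compX hw0) (comp1 hw0) (compz hw0).
have hqcq : q * cq = 1.
  rewrite hcq /w; have -> : q * (1 - - f - (- f) ^+ 2) = q - q * (f * f - f) by ring.
  by rewrite hA' Qe; ring.
have hiq : q * fps_inv q = 1 by apply: fps_invP; rewrite q0 oner_neq0.
have hciq : fps_comp (fps_inv q) w * cq = 1.
  by rewrite /cq -(compM hw0) mulrC hiq (comp1 hw0).
have h1 : fps_inv q * fps_comp (fps_inv q) w = 1.
  rewrite -[LHS]mulr1 -hqcq.
  transitivity ((q * fps_inv q) * (fps_comp (fps_inv q) w * cq)); first by ring.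
  by rewrite hiq hciq mulr1.
have hY0 : Y 0%N = 0 by rewrite /Y /fps_comp big_ord1 f0 mul0r.
have hYY : Y * Y - Y - (z + z * z) = 0.
  rewrite -[RHS](mulr0 q) -hcomp -hA'.
  transitivity ((q * cq) * (Y * Y - Y) + q * (f * f - f)); first by rewrite hqcq mul1r.
  by rewrite /w; ring.
have hYz : Y + z = 0.
  apply: (@cancel_unit (Y - z - 1)); last by rewrite -hYY; ring.
  rewrite -!addE -!oppE /fps_add /fps_opp hY0.
  have -> : z 0%N = 0 by [].
  by rewrite one0 subr0 sub0r oppr_eq0 oner_eq0.
have E1 : fps_mul (fps_mul (fps_exp (fps_inv q) n) (fps_comp (fps_one C) f))
     (fps_comp (fps_mul (fps_exp (fps_inv q) n) (fps_comp (fps_one C) f))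
        (fps_comp (fps_opp (fps_z C)) f)) = 1.
  rewrite oneE (comp1 f0) oppE (compN f0) (compz f0) !mulE mulr1 -/w expE (compX hw0).
  by rewrite -exprMn h1 expr1n.
have E2 : fps_comp (fps_comp (fps_opp (fps_z C)) f) (fps_comp (fps_opp (fps_z C)) f) = fps_z C.
  rewrite oppE (compN f0) (compz f0) -/w (compN hw0) -/Y.
  by rewrite -[LHS]addr0 -hYz; ring.
split; last by split => i /=; rewrite ?E1 ?E2.
split.
  by rewrite expE coef0X /fps_inv /= q0 invr1 expr1n oner_neq0.
split; first exact: f0.
have s1 : fps_sqrt1 P 1%N = (-6) / 2.
  by rewrite (sqrt_rec P 0) big_ord0 subr0 hP0.
have s0 : fps_sqrt1 P 0%N = 1 by [].
have q1 : q 1%N = -1 by rewrite hq.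
have iv0 : fps_inv (q + q) 0%N = ((q + q) 0%N)^-1 by [].
rewrite hf -mulE /fps_mul big_ord_recr big_ord1 /= -!addE -!oppE /fps_add /fps_opp.
rewrite iv0 q0 q1 s0 s1 subrr mul0r add0r -addE /fps_add q0.
have -> : (-1 - (-6) / 2) * (1 + 1)^-1 = 1 :> C.
  by field; rewrite ?h2 ?h11.
exact: oner_neq0.
Qed.

End Main.

Unset Implicit Arguments.

Theorem mainTheorem12 (C : numClosedFieldType) (n : nat) (hn : (0 < n)%N) :
  let q : fps C := fps_poly [:: 1; -1; -1] in                 (* 1 - z - z^2 *)
  let P : fps C := fps_poly [:: 1; -6; -1; 10; 5] in          (* 5z^4+10z^3-z^2-6z+1 *)
  let f : fps C :=
    fps_mul (fps_add q (fps_opp (fps_sqrt1 P)))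
            (fps_inv (fps_poly [:: 2; -2; -2])) in             (* (q - sqrt P)/(2-2z-2z^2) *)
  pseudo_involution (fps_exp (fps_inv q) n) f.
Proof.
move=> q P f.
have h2 : (2 : C) != 0 by rewrite pnatr_eq0.
exact: (@mainC C h2 n q P f erefl erefl erefl).
Qed.
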